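(* Let $F_1,\dots,F_n$ be fields, $R=F_1\times\cdots\times F_n$, and let $A=\{(x_1,\dots,x_n)\in W^*(R): x_i\in\{0,1\}\text{ for all }i\}$. Then $\omega(\Gamma'(R)[A])=\omega(\Gamma'(R))$ and $\chi(\Gamma'(R)[A])=\chi(\Gamma'(R))$.
   Context: All rings are commutative with identity. $W^*(R)$ denotes the set of non-zero non-unit elements of $R$. The cozero-divisor graph $\Gamma'(R)$ is the simple graph with vertex set $W^*(R)$, in which distinct $a,b$ are adjacent iff $a\notin Rb$ and $b\notin Ra$. For a vertex subset $A$, $\Gamma'(R)[A]$ denotes the induced subgraph on $A$. $\omega$ and $\chi$ denote clique number and chromatic number. *)

(* Defs.v *)
From HB Require Import structures.
From mathcomp Require Import all_boot all_algebra.
Set Implicit Arguments. Unset Strict Implicit. Unset Printing Implicit Defensive.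
Import GRing.Theory.
Local Open Scope ring_scope.

Section ProdRing.
Variables (n : nat) (F : 'I_n -> fieldType).

Definition prodR : Type := forall i : 'I_n, F i.
Definition pzero : prodR := fun i => 0.
Definition pone : prodR := fun i => 1.
Definition pmul (a b : prodR) : prodR := fun i => a i * b i.

Definition punit (a : prodR) : Prop := exists b : prodR, pmul a b = pone.
Definition Wstar (a : prodR) : Prop := a <> pzero /\ ~ punit a.
Definition in_principal (a b : prodR) : Prop := exists r : prodR, a = pmul r b.
Definition cozero_adj (a b : prodR) : Prop :=
  a <> b /\ ~ in_principal a b /\ ~ in_principal b a.
Definition setA (a : prodR) : Prop :=
  Wstar a /\ forall i, a i = 0 \/ a i = 1.
End ProdRing.

Section Graphs.
Variables (T : Type) (V : T -> Prop) (adj : T -> T -> Prop).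

Definition induced (B : T -> Prop) : T -> Prop := fun x => V x /\ B x.

Definition has_clique (k : nat) : Prop :=
  exists f : 'I_k -> T, injective f /\ (forall i, V (f i)) /\
    (forall i j, i <> j -> adj (f i) (f j)).

Definition clique_number (k : nat) : Prop :=
  has_clique k /\ forall m, has_clique m -> (m <= k)%N.

Definition colorable (k : nat) : Prop :=
  exists c : T -> 'I_k, forall x y, V x -> V y -> adj x y -> c x <> c y.

Definition chromatic_number (k : nat) : Prop :=
  colorable k /\ forall m, colorable m -> (k <= m)%N.
End Graphs.

(* Main.v *)
Require Import Defs.
From mathcomp Require Import all_boot all_algebra.
From Stdlib Require Import FunctionalExtensionality Classical.
Import GRing.Theory.
Set Implicit Arguments. Unset Strict Implicit.
Local Open Scope ring_scope.

Section Aux.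
Variables (n : nat) (F : 'I_n -> fieldType).
Local Notation R := (@prodR n F).

Lemma inP (a b : R) : in_principal a b <-> forall i, b i = 0 -> a i = 0.
Proof.
split.
- by move=> [r ->] i; rewrite /pmul => ->; rewrite mulr0.
- move=> H; exists (fun i => if b i == 0 then 0 else a i / b i).
  apply: functional_extensionality_dep => i; rewrite /pmul.
  case: eqP => [/[dup] /H -> -> | /eqP bn]; first by rewrite mulr0.
  by rewrite divfK.
Qed.

Lemma unitP (a : R) : punit a <-> forall i, a i <> 0.
Proof.
split.
- move=> [b hb] i ai; have := congr1 (fun f => f i) hb.
  by rewrite /pmul /pone /= ai mul0r => /esym/eqP; rewrite oner_eq0.
- move=> H; exists (fun i => (a i)^-1).
  apply: functional_extensionality_dep => i; rewrite /pmul /pone.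
  by rewrite divff //; apply/eqP; apply: H.
Qed.

Lemma nzP (a : R) : a <> @pzero n F <-> exists i, a i <> 0.
Proof.
split.
- move=> H; apply: NNPP => Hn; apply: H.
  apply: functional_extensionality_dep => i.
  by apply: NNPP => ai; apply: Hn; exists i.
- by move=> [i ai] e; apply: ai; rewrite e.
Qed.

Definition ee (x : R) : R := fun i => if x i == 0 then 0 else 1.

Lemma eeE (x : R) i : ee x i = 0 <-> x i = 0.
Proof.
rewrite /ee; case: eqP => // xi; split=> // h.
- by have := @oner_neq0 (F i); rewrite h eqxx.
Qed.

Lemma Wstar_supp (a b : R) : (forall i, a i = 0 <-> b i = 0) ->
  Wstar a -> Wstar b.
Proof.
move=> H [/nzP [i ai] nu]; split.
- by apply/nzP; exists i => bi; apply: ai; apply/H.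
- move/unitP => hb; apply: nu; apply/unitP => j aj; by apply: (hb j); apply/H.
Qed.

Lemma Wstar_ee (x : R) : Wstar (ee x) <-> Wstar x.
Proof.
split; apply: Wstar_supp => i; [|symmetry]; apply: eeE.
Qed.

Lemma in_ee (a b : R) : in_principal (ee a) (ee b) <-> in_principal a b.
Proof.
rewrite !inP; split=> H i.
- by move=> /eeE /H /eeE.
- by move=> /eeE /H /eeE.
Qed.

Lemma in_refl (a : R) : in_principal a a.
Proof. by apply/inP. Qed.

Lemma adj_ee (a b : R) : cozero_adj a b -> cozero_adj (ee a) (ee b).
Proof.
move=> [_ [h1 h2]]; rewrite /cozero_adj !in_ee; split=> //.
by move=> e; apply: h1; rewrite -in_ee e; apply: in_refl.
Qed.

Lemma setA_ee (x : R) : Wstar x -> setA (ee x).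
Proof.
move=> w; split; first by apply/Wstar_ee.
by move=> i; rewrite /ee; case: eqP; [left|right].
Qed.

Lemma clique_eq k :
  has_clique (induced (@Wstar n F) (@setA n F)) (@cozero_adj n F) k
  <-> has_clique (@Wstar n F) (@cozero_adj n F) k.
Proof.
split.
- move=> [f [fi [fv fa]]]; exists f; split=> //; split=> [i|]; [by case: (fv i) | done].
- move=> [f [fi [fv fa]]]; exists (fun i => ee (f i)); split; last split.
  + move=> i j e; case: (eqVneq i j) => // /eqP ij.
    by case: (adj_ee (fa i j ij)).
  + by move=> i; split; [apply/Wstar_ee | apply: setA_ee].
  + by move=> i j ij; apply: adj_ee; apply: fa.
Qed.

Lemma color_eq k :
  colorable (induced (@Wstar n F) (@setA n F)) (@cozero_adj n F) k
  <-> colorable (@Wstar n F) (@cozero_adj n F) k.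
Proof.
split.
- move=> [c Hc]; exists (fun x => c (ee x)) => x y wx wy a.
  apply: Hc; [split; [apply/Wstar_ee|apply: setA_ee]..|apply: adj_ee] => //.
- by move=> [c Hc]; exists c => x y [wx _] [wy _]; apply: Hc.
Qed.
End Aux.

Theorem mainTheorem11 (n : nat) (F : 'I_n -> fieldType) :
  (forall k : nat,
      clique_number (induced (@Wstar n F) (@setA n F)) (@cozero_adj n F) k
      <-> clique_number (@Wstar n F) (@cozero_adj n F) k) /\
  (forall k : nat,
      chromatic_number (induced (@Wstar n F) (@setA n F)) (@cozero_adj n F) k
      <-> chromatic_number (@Wstar n F) (@cozero_adj n F) k).
Proof.
split=> k.
- rewrite /clique_number clique_eq; split=> [[h1 h2]|[h1 h2]]; split=> // m.
  + by move/clique_eq; apply: h2.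
  + by move/clique_eq; apply: h2.
- rewrite /chromatic_number color_eq; split=> [[h1 h2]|[h1 h2]]; split=> // m.
  + by move/color_eq; apply: h2.
  + by move/color_eq; apply: h2.
Qed.
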